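(* Let $p$ be an odd prime and $k\ge 0$. For every $s\ge 1$, every $0\le l<p^k$ and every $0\le l'<p^{k+1}$, $$\sum_{P\in\mathcal P(V_{s,l})}(-1)^{\mathrm{inv}(P)}=0\qquad\text{and}\qquad \sum_{P\in\mathcal P(W_{s+1,l'})}(-1)^{\mathrm{inv}(P)}=0 .$$
   Context: Fix an odd prime $p$ and an integer $k\ge 0$. For integers $0\le i<n$ write $\lambda(n,i)=(n-i,1^i)$ for the hook partition of $n$ with $n-i$ boxes in its first row and $i$ further boxes in its first column. If $\mu=\lambda(n',i')$ is obtained from $\lambda(n,i)$ by appending $m=(n'-i')-(n-i)\ge 0$ boxes to the first row and $n''=i'-i\ge 0$ boxes to the first column, we say $\mu$ is obtained by adding the block $B_{m,n''}$ ($m$ horizontal nodes, $n''$ vertical nodes). Put $x_s=p^k(sp-(s+1))$. The relevant part (''column $k$'') of the $p$-Bratteli diagram is the graded directed graph with vertices: on floor $2k+1$, $S_i=\lambda(p^k(p-1),i)$ for $0\le i<p^k(p-1)$; on floor $2(k+s)$ ($s\ge1$), $V_{s,l}=\lambda\big(p^k(2sp-(2s+1)),\,x_s+l\big)$ for $0\le l<p^k$; on floor $2(k+s)-1$ ($s\ge2$), $W_{s,l'}=\lambda\big(p^k((2s-1)p-2s),\,x_{s-1}+l'\big)$ for $0\le l'<p^{k+1}$; and edges, each labelled by the block added: (E1) $S_i\to V_{1,l}$ exactly when $i=p^kt+l$ with $0\le t\le p-2$, block $B_{p^kt,\,p^k(p-2-t)}$; (E2) for $s\ge2$, $0\le l<p^k$,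 $0\le\beta\le p-1$: $V_{s-1,l}\to W_{s,pl+\beta}$, block $B_{p^k(p-1)-((p-1)l+\beta),\,(p-1)l+\beta}$; (E3) for $s\ge 2$, $0\le l'<p^{k+1}$ and $t=\lfloor l'/p^k\rfloor$: $W_{s,l'}\to V_{s,l'-p^kt}$, block $B_{p^kt,\,p^k(p-1-t)}$. A path ending at a vertex $v$ is a sequence of edges starting at some $S_i$ and going up one floor at a time to $v$ ($S_i\to V_{1,\cdot}\to W_{2,\cdot}\to V_{2,\cdot}\to W_{3,\cdot}\to\cdots\to v$); $\mathcal P(v)$ is the set of all paths ending at $v$. The blocks of a path are numbered $B^2,B^3,\dots,B^N$: $B^2$ is the block of the edge leaving $S_i$, and for $j\ge2$, $B^{2j-1}$ is the block of the edge into $W_{j,\cdot}$ and $B^{2j}$ the block of the edge into $V_{j,\cdot}$. Write $B^j=B_{m_j,n_j}$. Inversions: $(1,2)\in\mathrm{Inv}(P)$ iff $m_2=p^kt$ with $0\le t<\frac{p-1}{2}$; for $3\le i<j\le N$, $(i,j)\in\mathrm{Inv}(P)$ iff $m_i>m_j$ and $n_i<n_j$; no other pairs are inversions. $\mathrm{inv}(P)=|\mathrm{Inv}(P)|$. *)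

(* Defs.v *)
From HB Require Import structures.
From mathcomp Require Import all_boot all_order all_algebra.
Set Implicit Arguments. Unset Strict Implicit. Unset Printing Implicit Defensive.
Import GRing.Theory.

(* Vertices of "column k" of the p-Bratteli diagram:
   VS i    = S_i     (floor 2k+1),
   VV s l  = V_{s,l} (floor 2(k+s)),
   VW s l' = W_{s,l'} (floor 2(k+s)-1). *)
Inductive vtx := VS of nat | VV of nat & nat | VW of nat & nat.

Definition vtx_code (v : vtx) : nat * nat * nat :=
  match v with VS i => (0, 0, i) | VV s l => (1, s, l) | VW s l => (2, s, l) end.
Definition vtx_decode (c : nat * nat * nat) : vtx :=
  match c with (0, _, i) => VS i | (1, s, l) => VV s l | (_, s, l) => VW s l end.
Lemma vtx_codeK : cancel vtx_code vtx_decode. Proof. by case. Qed.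
HB.instance Definition _ := Equality.copy vtx (can_type vtx_codeK).

Definition vfloor (k : nat) (v : vtx) : nat :=
  match v with
  | VS _ => (2 * k).+1
  | VV s _ => 2 * (k + s)
  | VW s _ => (2 * (k + s)).-1
  end.

Definition vlevel (v : vtx) : nat :=
  match v with VS _ => 0 | VV s _ => s | VW s _ => s end.

(* Edges: [edge p k u w = Some (m, n)] iff there is an edge u -> w, labelled by
   the block B_{m,n}; [None] iff there is no edge. *)
Definition edge (p k : nat) (u w : vtx) : option (nat * nat) :=
  match u, w with
  | VS i, VV 1 l =>
      (* (E1): i = p^k t + l, 0 <= t <= p-2, block B_{p^k t, p^k (p-2-t)} *)
      if [&& i < p ^ k * (p - 1), l < p ^ k & i %% p ^ k == l] then
        let t := i %/ p ^ k in Some (p ^ k * t, p ^ k * (p - 2 - t))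
      else None
  | VV s1 l, VW s2 l' =>
      if [&& 1 <= s1, s2 == s1.+1, l < p ^ k & l' %/ p == l] then
        let beta := l' %% p in
        let c := (p - 1) * l + beta in
        Some (p ^ k * (p - 1) - c, c)
      else None
  | VW s1 l', VV s2 l =>
      if [&& 2 <= s1, s2 == s1, l' < p ^ (k.+1) & l == l' - p ^ k * (l' %/ p ^ k)]
      then let t := l' %/ p ^ k in Some (p ^ k * t, p ^ k * (p - 1 - t))
      else None
  | _, _ => None
  end.

Definition column (p k smax : nat) : seq vtx :=
  [seq VS i | i <- iota 0 (p ^ k * (p - 1))]
  ++ [seq VV s l | s <- iota 1 smax, l <- iota 0 (p ^ k)]
  ++ [seq VW s l | s <- iota 2 (smax - 1), l <- iota 0 (p ^ k.+1)].

Fixpoint lists_of (T : Type) (xs : seq T) (n : nat) : seq (seq T) :=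
  match n with
  | 0 => [:: [::]]
  | n.+1 => [seq x :: l | x <- xs, l <- lists_of xs n]
  end.

Definition is_start (p k : nat) (u : vtx) : bool :=
  if u is VS i then i < p ^ k * (p - 1) else false.

Definition is_path (p k : nat) (v : vtx) (P : seq vtx) : bool :=
  match P with
  | [::] => false
  | u :: rest =>
      [&& is_start p k u,
          path (fun a b => (edge p k a b != None) && (vfloor k b == (vfloor k a).+1))
               u rest
        & last u rest == v]
  end.

Definition paths_to (p k : nat) (v : vtx) : seq (seq vtx) :=
  [seq P <- lists_of (column p k (vlevel v)) (vfloor k v - 2 * k) | is_path p k v P].

(* The blocks B^2, ..., B^N of a path with N vertices. *)
Definition blocks (p k : nat) (P : seq vtx) : seq (nat * nat) :=
  match P with
  | [::] => [::]
  | u :: rest => pmap id (pairmap (edge p k) u rest)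
  end.

Definition inv (p k : nat) (bs : seq (nat * nat)) : nat :=
  let N := (size bs).+1 in
  let B j := nth (0, 0) bs (j - 2) in
  nat_of_bool (if bs is (m2, _) :: _ then [exists t : 'I_((p - 1)./2), m2 == p ^ k * t]
               else false)
  + \sum_(3 <= i < N.+1) \sum_(i.+1 <= j < N.+1)
       nat_of_bool (((B j).1 < (B i).1) && ((B i).2 < (B j).2)).

Definition signed_count (p k : nat) (v : vtx) : int :=
  (\sum_(P <- paths_to p k v) (-1) ^+ inv p k (blocks p k P))%R.

(* Main.v *)
Require Import Defs.
From mathcomp Require Import all_boot all_order all_algebra.
From mathcomp Require Import zify.
Import GRing.Theory.
Local Open Scope nat_scope.

Definition G (bs : seq (nat * nat)) : nat :=
  \sum_(3 <= i < (size bs).+3) \sum_(i.+1 <= j < (size bs).+3)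
     nat_of_bool (((nth (0,0) bs (j - 3)).1 < (nth (0,0) bs (i - 3)).1) &&
                  ((nth (0,0) bs (i - 3)).2 < (nth (0,0) bs (j - 3)).2)).

Lemma inv_cons p k b bs : Defs.inv p k (b :: bs) =
  nat_of_bool [exists t : 'I_((p - 1)./2), b.1 == p ^ k * t] + G bs.
Proof.
case: b => m2 n2; rewrite /inv /G /=; congr (_ + _).
apply: eq_big_nat => i /andP[hi _]; apply: eq_big_nat => j /andP[hj _].
have -> : j - 2 = (j - 3).+1 by lia.
have -> : i - 2 = (i - 3).+1 by lia.
by [].
Qed.

Lemma exists_lt p k q : 0 < p ^ k ->
  [exists t : 'I_((p - 1)./2), p ^ k * q == p ^ k * t] = (q < (p - 1)./2).
Proof.
move=> hp; apply/existsP/idP => [[t /eqP]|hq].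
  by move/eqP; rewrite eqn_pmul2l // => /eqP ->.
by exists (Ordinal hq).
Qed.

Definition F p k v (P : seq vtx) : int :=
  if is_path p k v P then ((-1) ^+ Defs.inv p k (blocks p k P))%R else 0%R.

Lemma sum_first p k l c : 0 < p ^ k -> odd p ->
  (\sum_(0 <= i < p ^ k * (p - 1))
     (if modn i (p ^ k) == l then (-1) ^+ (nat_of_bool (divn i (p ^ k) < (p - 1)./2)%N) * c
      else 0) = 0 :> int)%R.
Proof.
move=> hp hodd.
set h := (p - 1)./2.
have hp1 : p ^ k * (p - 1) = h * p ^ k + h * p ^ k.
  rewrite /h; move: hodd; case: (p) => // q /= hq.
  have e := odd_double_half q; rewrite (negbTE hq) add0n in e.
  rewrite subn1 /=; set x := _ ^ k.
  by rewrite -{1}e -addnn mulnDr [x * _]mulnC.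
rewrite hp1 (big_cat_nat _ (n := h * p ^ k)) ?leq_addr //=.
rewrite -{2}[h * p ^ k]add0n big_addn addnK.
rewrite -big_split /=; apply: big1_seq => i /andP[_]; rewrite mem_index_iota => /andP[_ hi].
rewrite ltn_divLR // hi.
rewrite ltn_divLR // ltnNge leq_addl /=.
rewrite -modnDm modnMl addn0 modn_mod.
by case: ifP => _; rewrite ?expr1 ?expr0 ?mulN1r ?mul1r ?addNr ?addr0.
Qed.

Lemma filter_column p k m :
  filter (is_start p k) (column p k m) = [seq VS i | i <- iota 0 (p ^ k * (p - 1))].
Proof.
rewrite /column !filter_cat filter_map.
rewrite (@eq_in_filter _ _ predT); last by move=> i; rewrite mem_iota /= add0n.
rewrite filter_predT.
rewrite (@eq_in_filter _ _ pred0); last by move=> x /allpairsP[[a b] [_ _ ->]].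
rewrite (@eq_in_filter _ _ pred0 [seq VW _ _ | _ <- _, _ <- _]); last by move=> x /allpairsP[[a b] [_ _ ->]].
by rewrite !filter_pred0 !cats0.
Qed.

Lemma sum_lists p k v xs n : odd p -> 0 < p ^ k -> (forall i, v != VS i) ->
  filter (is_start p k) xs = [seq VS i | i <- iota 0 (p ^ k * (p - 1))] ->
  (\sum_(P <- lists_of xs n) F p k v P = 0)%R.
Proof.
move=> hodd hp hv hxs.
case: n => [|n]; first by rewrite /= big_seq1 /F.
rewrite /= big_allpairs_dep exchange_big /=; apply: big1 => Q _.
have -> : (\sum_(x <- xs) F p k v (x :: Q) = \sum_(x <- xs | is_start p k x) F p k v (x :: Q))%R.
  rewrite [RHS]big_mkcond; apply: eq_bigr => x _; case: ifP => // hs.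
  by rewrite /F /= hs.
rewrite -big_filter hxs big_map.
case: Q => [|w rest].
  apply: big1 => i _; rewrite /F /=.
  by have := hv i; rewrite eq_sym => /negbTE ->; rewrite !andbF.
case: w => [j|[|[|s]] l|s l]; try (apply: big1 => i _; rewrite /F /= ?andbF //; fail).
apply: etrans _ (@sum_first p k l ((-1) ^+ G (blocks p k (VV 1 l :: rest))
   *+ (path (fun a b => (edge p k a b != None) && (vfloor k b == (vfloor k a).+1))
               (VV 1 l) rest && (last (VV 1 l) rest == v) && (l < p ^ k)%N))%R hp hodd).
rewrite /index_iota subn0; apply: eq_big_seq => i; rewrite mem_iota add0n => /andP[_ hi].
rewrite /F /is_path /= hi.
have h2 : (2 * (k + 1) == (2 * k).+2) by apply/eqP; lia.
rewrite h2 /=.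
set C1 := path _ _ _; set C2 := (last _ _ == v).
case: (l < p ^ k); case: (i %% p ^ k == l) => /=; rewrite ?andbF ?mulr0n ?mulr0 //.
case: C1 C2 => [] [] /=; rewrite ?mulr0n ?mulr0 //.
by rewrite inv_cons /= exists_lt // exprD mulr1n.
Qed.

Lemma signed_zero p k v : odd p -> 0 < p ^ k -> (forall i, v != VS i) ->
  signed_count p k v = 0%R.
Proof.
move=> hodd hp hv; rewrite /signed_count /paths_to big_filter.
have H := @sum_lists p k v _ (vfloor k v - 2 * k) hodd hp hv (filter_column p k (vlevel v)).
rewrite /F -big_mkcond in H.
exact: H.
Qed.

Theorem mainTheorem1 (p k : nat) :
  prime p -> odd p ->
  forall s : nat, 1 <= s ->
    (forall l : nat, l < p ^ k -> signed_count p k (VV s l) = 0%R) /\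
    (forall l' : nat, l' < p ^ k.+1 -> signed_count p k (VW s.+1 l') = 0%R).
Proof.
move=> hpr hodd s _; have hp : 0 < p ^ k by rewrite expn_gt0 prime_gt0.
by split => l _; apply: signed_zero.
Qed.
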